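(* Let $h\in[n+1]^d$ with $\mathcal Y^h\ne\emptyset$. Then for every $t\in\mathbb{R}^d_+$, \[ \hat\Phi^{\mathrm{lwc}}(t;h)=\max_{1\le j\le d}\Big\{\frac{t_j}{r_j(h_j)}-\min\Big\{\frac{\hat\mu_j(0)}{\hat\sigma_j(0)},\ \lim_{z_j\uparrow\omega_j(\hat Q^{\mathrm{gwc}}_{1-\alpha})}\frac{\hat\mu_j(z_j)}{\hat\sigma_j(z_j)}\Big\}\Big\}, \] where $r_j(h_j)=\hat\sigma_j$ if $E^{(h_j-1)}_j\le\hat\mu_j<U^{h_j}_j$, and $r_j(h_j)=\min\{\hat\sigma_j(E^{(h_j-1)}_j),\hat\sigma_j(U^{h_j}_j)\}$ otherwise (the limit is $z_j\to\infty$ when $\omega_j(\hat Q^{\mathrm{gwc}}_{1-\alpha})=+\infty$).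
   Context: Setting: $n\ge2$, $d\ge1$, $\alpha\in(0,1)$. Calibration residuals $E^1,\dots,E^n\in\mathbb{R}^d_+$ with, for each $j$, pairwise distinct coordinates $E^1_j,\dots,E^n_j$; test input $X^{n+1}\in\mathcal X$ and a residual function $E:\mathcal X\times\mathbb{R}^d\to\mathbb{R}^d$. $\hat Q_{1-\alpha}(x_1,\dots,x_n)$: the $\lceil(1-\alpha)(n+1)\rceil$-th smallest value of $\{x_1,\dots,x_n,+\infty\}$. $\hat\mu_j=\frac1n\sum_{i=1}^nE^i_j$, $\hat\sigma_j=\sqrt{\frac1n\sum_{i=1}^n(E^i_j-\hat\mu_j)^2}$; for $z\ge0$, $\hat\mu_j(z)=\frac{\sum_{i=1}^nE^i_j+z}{n+1}$, $\hat\sigma_j(z)=\sqrt{\frac{\sum_{i=1}^n(E^i_j-\hat\mu_j(z))^2+(z-\hat\mu_j(z))^2}{n}}$. Link functions: $\omega_j(c)=0$ if $c\le-\frac n{\sqrt{n+1}}$; $\max\{0,\hat\mu_j-\hat\sigma_j|c|\sqrt{\tfrac{(n+1)^2}{n^2-(n+1)c^2}}\}$ if $-\frac n{\sqrt{n+1}}<c<0$; $\hat\mu_j+\hat\sigma_j|c|\sqrt{\tfrac{(n+1)^2}{n^2-(n+1)c^2}}$ if $0\le c<\frac n{\sqrt{n+1}}$; $+\infty$ if $c\ge\frac n{\sqrt{n+1}}$. GWC: $\hat\Phi^{\mathrm{gwc}}(t)=\max_j\sup_{z_j\ge0}\frac{t_j-\hat\mu_j(z_j)}{\hat\sigma_j(z_j)}$,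 $\hat Q^{\mathrm{gwc}}_{1-\alpha}=\hat Q_{1-\alpha}(\hat\Phi^{\mathrm{gwc}}(E^1),\dots,\hat\Phi^{\mathrm{gwc}}(E^n))$, $\mathcal E^{\mathrm{gwc}}=\prod_{j=1}^d[0,\omega_j(\hat Q^{\mathrm{gwc}}_{1-\alpha})]$ (interpreted as $[0,\infty)$ when $\omega_j=+\infty$). Partition: $E^{(k)}_j$ is the $k$-th smallest of $E^1_j,\dots,E^n_j$ for $k\in[n]$, with $E^{(0)}_j:=0$, $E^{(n+1)}_j:=+\infty$. For $h\in[n+1]^d$: $U^{h_j}_j:=\min\{E^{(h_j)}_j,\omega_j(\hat Q^{\mathrm{gwc}}_{1-\alpha})\}$, $R^h:=\prod_{j=1}^d[E^{(h_j-1)}_j,U^{h_j}_j)$, $\mathcal Y^h:=\{y\in\mathbb{R}^d:E(X^{n+1},y)\in R^h\}$. LWC transformation: $\hat\Phi^{\mathrm{lwc}}(t;h):=\max_{1\le j\le d}\Big\{\sup_{z\in R^h}\frac{t_j}{\hat\sigma_j(z_j)}-\inf_{z\in\mathcal E^{\mathrm{gwc}}}\frac{\hat\mu_j(z_j)}{\hat\sigma_j(z_j)}\Big\}$. *)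

(* Defs.v *)
From HB Require Import structures.
From mathcomp Require Import all_boot all_order all_algebra.
From mathcomp Require Import all_classical all_reals all_analysis.
Set Implicit Arguments. Unset Strict Implicit. Unset Printing Implicit Defensive.
Import Order.TTheory GRing.Theory Num.Theory.
Import numFieldNormedType.Exports.
Local Open Scope classical_set_scope.
Local Open Scope ring_scope.

Section Defs.
Variables (R : realType) (n d : nat).
(* calibration residuals: E i j = E^{i+1}_{j+1} *)
Variable E : 'I_n -> 'I_d -> R.

Definition muhat (j : 'I_d) : R := (\sum_(i < n) E i j) / n%:R.
Definition sigmahat (j : 'I_d) : R :=
  Num.sqrt ((\sum_(i < n) (E i j - muhat j) ^+ 2) / n%:R).

Definition muz (j : 'I_d) (z : R) : R := (\sum_(i < n) E i j + z) / n.+1%:R.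
Definition sigmaz (j : 'I_d) (z : R) : R :=
  Num.sqrt ((\sum_(i < n) (E i j - muz j z) ^+ 2 + (z - muz j z) ^+ 2) / n%:R).

Definition sigmaz_e (j : 'I_d) (z : \bar R) : \bar R :=
  match z with
  | EFin r => (sigmaz j r)%:E
  | _ => +oo%E
  end.

Definition Qhat (a : R) (x : 'I_n -> \bar R) : \bar R :=
  nth (+oo)%E (sort (<=%O) (rcons [seq x i | i <- enum 'I_n] (+oo)%E))
      (`|Num.ceil ((1 - a) * n.+1%:R)|%N).-1.

Definition omega (j : 'I_d) (c : \bar R) : \bar R :=
  let b := n%:R / Num.sqrt (n.+1%:R) : R in
  match c with
  | EFin c =>
      let s := Num.sqrt (n.+1%:R ^+ 2 / (n%:R ^+ 2 - n.+1%:R * c ^+ 2)) in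
      if c <= - b then 0%E
      else if c < 0 then (Num.max 0 (muhat j - sigmahat j * `|c| * s))%:E
      else if c < b then (muhat j + sigmahat j * `|c| * s)%:E
      else (+oo)%E
  | +oo%E => (+oo)%E
  | -oo%E => 0%E
  end.

Definition Phi_gwc (t : 'I_d -> R) : \bar R :=
  \big[Order.max/-oo%E]_(j < d)
    ereal_sup [set ((t j - muz j z) / sigmaz j z)%:E | z in [set z : R | 0 <= z]].

Definition Q_gwc (a : R) : \bar R := Qhat a (fun i => Phi_gwc (E i)).

Definition E_gwc (a : R) : set ('I_d -> R) :=
  [set z | forall j, 0 <= z j /\ ((z j)%:E <= omega j (Q_gwc a))%E].

Definition Eord (j : 'I_d) (k : nat) : \bar R :=
  if k == 0%N then 0%E
  else if (k <= n)%N then (nth 0 (sort (<=%R) [seq E i j | i <- enum 'I_n]) k.-1)%:E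
  else (+oo)%E.

Definition Uh (a : R) (j : 'I_d) (k : nat) : \bar R :=
  Order.min (Eord j k) (omega j (Q_gwc a)).

Definition Rh (a : R) (h : 'I_d -> nat) : set ('I_d -> R) :=
  [set z | forall j, (Eord j (h j).-1 <= (z j)%:E)%E /\ ((z j)%:E < Uh a j (h j))%E].

Definition Yh (X : Type) (Eres : X -> ('I_d -> R) -> ('I_d -> R))
  (x : X) (a : R) (h : 'I_d -> nat) : set ('I_d -> R) :=
  [set y | Rh a h (Eres x y)].

Definition Phi_lwc (a : R) (t : 'I_d -> R) (h : 'I_d -> nat) : \bar R :=
  \big[Order.max/-oo%E]_(j < d)
    (ereal_sup [set ((t j) / sigmaz j (z j))%:E | z in Rh a h]
     - ereal_inf [set (muz j (z j) / sigmaz j (z j))%:E | z in E_gwc a])%E.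

Definition r_h (a : R) (j : 'I_d) (k : nat) : R :=
  if ((Eord j k.-1 <= (muhat j)%:E) && ((muhat j)%:E < Uh a j k))%E
  then sigmahat j
  else fine (Order.min (sigmaz_e j (Eord j k.-1)) (sigmaz_e j (Uh a j k))).

Definition lim_ratio (a : R) (j : 'I_d) : R :=
  match omega j (Q_gwc a) with
  | EFin w => lim ((muz j z / sigmaz j z) @[z --> w^'-])
  | _ => lim ((muz j z / sigmaz j z) @[z --> +oo])
  end.

End Defs.

(* Main.v *)
Require Import Defs.
From HB Require Import structures.
From mathcomp Require Import all_boot all_order all_algebra.
From mathcomp Require Import all_classical all_reals all_analysis.
From mathcomp Require Import lra ring.
Import Order.TTheory GRing.Theory Num.Theory.
Import numFieldNormedType.Exports.
Local Open Scope classical_set_scope.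
Local Open Scope ring_scope.
Set Implicit Arguments. Unset Strict Implicit.


Section Core.
Variables (R : realType) (k m s2 : R).
Hypotheses (k0 : 0 < k) (k1 : k < 1) (m0 : 0 < m) (s0 : 0 < s2).
Ltac pre := have K0 := k0; have K1 := k1; have M0 := m0; have S0 := s0.

Definition NN (z : R) := m + k * (z - m).
Definition DD (z : R) := Num.sqrt (s2 + k * (z - m) ^+ 2).
Definition FF (z : R) := NN z / DD z.

Lemma DD_gt0 z : 0 < DD z.
Proof. pre; rewrite sqrtr_gt0; have h : 0 <= k * (z-m)^+2 := mulr_ge0 (ltW k0) (sqr_ge0 (z - m)); lra. Qed.

Lemma DD_sqr z : DD z ^+ 2 = s2 + k * (z - m) ^+ 2.
Proof. pre; rewrite sqr_sqrtr //; have h : 0 <= k * (z-m)^+2 := mulr_ge0 (ltW k0) (sqr_ge0 (z - m)); lra. Qed.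

Lemma DD_le x y : (x - m) ^+ 2 <= (y - m) ^+ 2 -> DD x <= DD y.
Proof.
pre; move=> h.
have h' : k * (x-m)^+2 <= k * (y-m)^+2 by rewrite ler_pM2l.
have h'' : 0 <= k * (x-m)^+2 := mulr_ge0 (ltW k0) (sqr_ge0 (x - m)).
rewrite ler_sqrt; lra.
Qed.

Lemma DD_lt x y : (x - m) ^+ 2 < (y - m) ^+ 2 -> DD x < DD y.
Proof.
pre; move=> h.
have h' : k * (x-m)^+2 < k * (y-m)^+2 by rewrite ltr_pM2l.
have h'' : 0 <= k * (x-m)^+2 := mulr_ge0 (ltW k0) (sqr_ge0 (x - m)).
rewrite ltr_sqrt; lra.
Qed.

Lemma DDm : DD m = Num.sqrt s2.
Proof. by rewrite /DD subrr expr0n /= mulr0 addr0. Qed.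

Lemma NN_ge0 z : 0 <= z -> 0 <= NN z.
Proof.
pre; move=> z0; rewrite /NN.
have h1 : 0 <= k * z := mulr_ge0 (ltW k0) z0.
have h2 : 0 <= (1 - k) * m by apply: mulr_ge0; lra.
lra.
Qed.

Lemma FF_ge0 z : 0 <= z -> 0 <= FF z.
Proof. by move=> z0; apply: divr_ge0; [exact: NN_ge0|exact: ltW (DD_gt0 z)]. Qed.

Lemma DD_convex x y l : 0 <= l <= 1 ->
  DD (l * x + (1 - l) * y) <= l * DD x + (1 - l) * DD y.
Proof.
pre; move=> /andP[l0 l1].
have Dx := DD_sqr x; have Dy := DD_sqr y.
have Dx0 := DD_gt0 x; have Dy0 := DD_gt0 y.
set u := x - m in Dx; set v := y - m in Dy.
have P : s2 + k * u * v <= DD x * DD y.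
  have h1 : (s2 + k * u * v) ^+ 2 <= (DD x * DD y) ^+ 2.
    rewrite exprMn Dx Dy.
    have h : 0 <= s2 * k * (u - v)^+2.
      by apply: mulr_ge0; [apply: mulr_ge0; apply: ltW|apply: sqr_ge0].
    lra.
  have h2 : 0 < DD x * DD y by apply: mulr_gt0.
  nra.
have rhs0 : 0 <= l * DD x + (1 - l) * DD y.
  by apply: addr_ge0; apply: mulr_ge0; lra.
rewrite -(ger0_norm rhs0) -sqrtr_sqr ler_sqrt; last by apply: sqr_ge0.
have -> : l * x + (1 - l) * y - m = l * u + (1 - l) * v by rewrite /u /v; ring.
have e1 : l^+2 * DD x ^+ 2 = l^+2 * (s2 + k * u ^+ 2) by rewrite Dx.
have e2 : (1-l)^+2 * DD y ^+ 2 = (1-l)^+2 * (s2 + k * v ^+ 2) by rewrite Dy.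
have e3 : 0 <= l * (1 - l) * (DD x * DD y - (s2 + k * u * v)).
  by apply: mulr_ge0; [apply: mulr_ge0; lra|lra].
lra.
Qed.

Lemma NN_aff x y l : NN (l * x + (1 - l) * y) = l * NN x + (1 - l) * NN y.
Proof. rewrite /NN; ring. Qed.

Lemma FF_qc x z y : 0 <= x -> x <= z -> z <= y -> Num.min (FF x) (FF y) <= FF z.
Proof.
pre; move=> x0 xz zy.
have [exy|nxy] := eqVneq x y.
  have ez : z = x by apply/eqP; rewrite eq_le xz; rewrite exy zy.
  by rewrite ez exy minxx.
have lxy : x < y by rewrite lt_neqAle nxy /= (le_trans xz zy).
set c := Num.min (FF x) (FF y).
have y0 : 0 <= y by lra.
have c0 : 0 <= c by rewrite le_min !FF_ge0.
have cx : c * DD x <= NN x.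
  by rewrite -ler_pdivlMr ?DD_gt0 // ge_min lexx.
have cy : c * DD y <= NN y.
  by rewrite -ler_pdivlMr ?DD_gt0 // ge_min lexx orbT.
set l := (y - z) / (y - x).
have yx0 : y - x != 0 by rewrite subr_eq0 eq_sym.
have ez : z = l * x + (1 - l) * y.
  rewrite /l; field; exact: yx0.
have l0 : 0 <= l by rewrite /l divr_ge0 // subr_ge0 // ltW.
have l1 : l <= 1 by rewrite /l ler_pdivrMr ?subr_gt0 // mul1r; lra.
have hc := @DD_convex x y l.
rewrite /FF ler_pdivlMr ?DD_gt0 // ez NN_aff.
have h1 : c * DD (l * x + (1 - l) * y) <= c * (l * DD x + (1 - l) * DD y).
  by rewrite ler_wpM2l // hc // l0 l1.
have h2 : l * (c * DD x) <= l * NN x by rewrite ler_wpM2l.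
have h3 : (1 - l) * (c * DD y) <= (1 - l) * NN y by rewrite ler_wpM2l // subr_ge0.
lra.
Qed.

Lemma FF_noninc x y : m + s2 / m <= x -> x <= y -> FF y <= FF x.
Proof.
pre; move=> hx xy.
set u := x - m; set v := y - m.
have mu : s2 <= m * u by rewrite /u mulrC -ler_pdivrMr //; lra.
have mv : s2 <= m * v by rewrite /v mulrC -ler_pdivrMr //; lra.
have u0 : 0 <= u by have := divr_ge0 (ltW s0) (ltW m0); rewrite /u; lra.
have uv : u <= v by rewrite /u /v; lra.
have v0 : 0 <= v by lra.
have Nx : NN x = m + k * u by [].
have Ny : NN y = m + k * v by [].
have Nx0 : 0 < NN x by rewrite Nx; have := mulr_ge0 (ltW k0) u0; lra.
have Ny0 : 0 < NN y by rewrite Ny; have := mulr_ge0 (ltW k0) v0; lra.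
rewrite /FF ler_pdivrMr ?DD_gt0 // mulrAC ler_pdivlMr ?DD_gt0 //.
have Dx := DD_sqr x; have Dy := DD_sqr y.
have Dx0 := DD_gt0 x; have Dy0 := DD_gt0 y.
rewrite -/u in Dx; rewrite -/v in Dy.
have key : (NN y * DD x) ^+ 2 <= (NN x * DD y) ^+ 2.
  rewrite !exprMn Dx Dy Nx Ny.
  have e : (m + k * u) ^+ 2 * (s2 + k * v ^+ 2) - (m + k * v) ^+ 2 * (s2 + k * u ^+ 2)
    = k * (v - u) * (m * (m * u - s2) + m * (m * v - s2) + k * (u * (m * v - s2) + v * (m * u - s2))).
    ring.
  have p : 0 <= k * (v - u) * (m * (m * u - s2) + m * (m * v - s2) + k * (u * (m * v - s2) + v * (m * u - s2))).
    apply: mulr_ge0; first by apply: mulr_ge0; lra.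
    have a1 : 0 <= m * (m * u - s2) by apply: mulr_ge0; lra.
    have a2 : 0 <= m * (m * v - s2) by apply: mulr_ge0; lra.
    have a3 : 0 <= u * (m * v - s2) by apply: mulr_ge0; lra.
    have a4 : 0 <= v * (m * u - s2) by apply: mulr_ge0; lra.
    have a5 : 0 <= k * (u * (m * v - s2) + v * (m * u - s2)) by apply: mulr_ge0; lra.
    lra.
  lra.
have b0 : 0 < NN x * DD y by apply: mulr_gt0.
have a0 : 0 < NN y * DD x by apply: mulr_gt0.
nra.
Qed.

Lemma FF_cvg : cvg (FF x @[x --> +oo]).
Proof.
pre.
set z0 := m + s2 / m.
have z00 : 0 <= z0 by have := divr_ge0 (ltW s0) (ltW m0); rewrite /z0; lra.
pose g r := - FF (Num.max r z0).
have gnd : {homo g : a b / a <= b}.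
  move=> a b ab; rewrite /g lerN2; apply: FF_noninc.
    by rewrite le_max lexx orbT.
  by rewrite ge_max !le_max ab lexx /= orbT.
have gub : has_ubound (range g).
  exists 0 => _ [r _ <-]; rewrite /g oppr_le0; apply: FF_ge0.
  by rewrite le_max z00 orbT.
have := nondecreasing_cvgr gnd gub.
move=> /cvgN; rewrite opprK => hc.
apply/cvg_ex; exists (- sup (range g)).
apply: cvg_trans hc; apply: near_eq_cvg.
near=> x; rewrite /g /=.
have -> : Num.max x z0 = x by apply/max_idPl; near: x; apply: nbhs_pinfty_ge; rewrite num_real.
by [].
Unshelve. all: by end_near.
Qed.
End Core.

Section C2part.


Lemma DD_cvg (R : realType) (k m s2 : R) (k0 : 0 < k) (s0 : 0 < s2) (w : R) :
  DD k m s2 x @[x --> w] --> DD k m s2 w.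
Proof.
rewrite /DD.
apply: (@continuous_comp _ _ _ (fun x => s2 + k * (x - m) ^+ 2) Num.sqrt); last first.
  exact: sqrt_continuous.
apply: cvgD; first exact: cvg_cst.
apply: cvgMl_tmp.
rewrite expr2; under eq_fun do rewrite expr2.
by apply: cvgM; apply: cvgB; (exact: cvg_id || exact: cvg_cst).
Qed.

Lemma FF_cont (R : realType) (k m s2 : R) (k0 : 0 < k) (k1 : k < 1) (m0 : 0 < m) (s0 : 0 < s2) (w : R) :
  FF k m s2 x @[x --> w] --> FF k m s2 w.
Proof.
rewrite /FF; apply: cvgM.
  rewrite /NN; apply: cvgD; first exact: cvg_cst.
  by apply: cvgMl_tmp; apply: cvgB; (exact: cvg_id || exact: cvg_cst).
apply: cvgV; first by rewrite gt_eqF // DD_gt0.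
exact: DD_cvg.
Qed.

Lemma tD_cont (R : realType) (k m s2 : R) (k0 : 0 < k) (k1 : k < 1) (m0 : 0 < m) (s0 : 0 < s2) (t w : R) :
  (t / DD k m s2 x) @[x --> w] --> t / DD k m s2 w.
Proof.
apply: cvgMl_tmp; apply: cvgV; first by rewrite gt_eqF // (DD_gt0 k0 k1 m0 s0).
exact: DD_cvg.
Qed.

Local Open Scope ereal_scope.

Lemma inf_part (R : realType) (k m s2 : R) (k0 : (0 < k)%R) (k1 : (k < 1)%R)
  (m0 : (0 < m)%R) (s0 : (0 < s2)%R) (f : R -> R) (hf : forall x, f x = FF k m s2 x)
  (w : \bar R) (w0 : 0 <= w) :
  ereal_inf [set (f x)%:E | x in [set x : R | (0 <= x)%R /\ x%:E <= w]] =
  (Num.min (f 0) (match w with EFin w' => lim (f x @[x --> w'^'-]) | _ => lim (f x @[x --> +oo]) end))%:E.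
Proof.
have -> : f = FF k m s2 by apply/funext.
have F0 : (0 <= FF k m s2 0)%R by apply: FF_ge0.
case: w w0 => [w'| |] w0 /=; last by rewrite leeNy_eq in w0.
- rewrite lee_fin in w0.
  rewrite (cvg_lim _ (cvg_at_left_filter (FF_cont k0 k1 m0 s0 (w := w')))) //.
  apply/le_anti/andP; split.
    apply: ge_ereal_inf.
    have [h|h] := leP (FF k m s2 0) (FF k m s2 w').
      by exists (FF k m s2 0)%:E => //; exists 0%R.
    by exists (FF k m s2 w')%:E => //; exists w'.
  apply: le_ereal_inf_tmp => _ [x [x0 xw] <-]; rewrite lee_fin; rewrite lee_fin in xw.
  exact: FF_qc.
- set L := lim _.
  have lb : (Num.min (FF k m s2 0) L)%:E <= ereal_inf [set (FF k m s2 x)%:E | x in [set x : R | (0 <= x)%R /\ x%:E <= +oo]].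
    apply: le_ereal_inf_tmp => _ [x [x0 xw] <-]; rewrite lee_fin.
    have [h|h] := leP (FF k m s2 0) (FF k m s2 x).
      by rewrite ge_min h.
    rewrite ge_min; apply/orP; right.
    apply: limr_le; first exact: FF_cvg.
    near=> y.
    have hy : (x <= y)%R by near: y; apply: nbhs_pinfty_ge; rewrite num_real.
    have := FF_qc k0 k1 m0 s0 (lexx 0) x0 hy.
    by rewrite ge_min => /orP[|//]; rewrite leNgt h.
  apply/le_anti; rewrite lb andbT.
  have ub0 : ereal_inf [set (FF k m s2 x)%:E | x in [set x : R | (0 <= x)%R /\ x%:E <= +oo]] <= (FF k m s2 0)%:E.
    by apply: ereal_inf_lbound; exists 0%R.
  have [h|h] := leP (FF k m s2 0) L.
    by [].
  set I := ereal_inf _ in lb ub0 *.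
  have Ifin : I \is a fin_num by rewrite fin_numElt (lt_le_trans _ lb) ?ltNyr // (le_lt_trans ub0) ?ltry.
  rewrite -(fineK Ifin) lee_fin.
  apply: limr_ge; first exact: FF_cvg.
  near=> y.
  have hy : (0 <= y)%R by near: y; apply: nbhs_pinfty_ge; rewrite num_real.
  have : I <= (FF k m s2 y)%:E by apply: ereal_inf_lbound; exists y => //; split => //; exact: leey.
  by rewrite -[in X in X -> _](fineK Ifin) lee_fin.
Unshelve. all: by end_near.
Qed.

Lemma div_le (R : realType) (t x r : R) : (0 <= t)%R -> (0 < r)%R -> (r <= x)%R -> (t / x <= t / r)%R.
Proof.
move=> t0 r0 rx; apply: ler_wpM2l => //.
by rewrite lef_pV2 ?posrE // (lt_le_trans r0 rx).
Qed.

Lemma sup_part (R : realType) (k m s2 : R) (k0 : (0 < k)%R) (k1 : (k < 1)%R)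
  (m0 : (0 < m)%R) (s0 : (0 < s2)%R) (g : R -> R) (hg : forall x, g x = DD k m s2 x)
  (De : \bar R -> \bar R) (hDe : forall e, De e = match e with EFin r => (g r)%:E | _ => +oo end)
  (t : R) (t0 : (0 <= t)%R) (a b : \bar R) (x0 : R) (ha : a <= x0%:E) (hb : x0%:E < b) :
  ereal_sup [set (t / g x)%:E | x in [set x : R | a <= x%:E /\ x%:E < b]] =
  (t / (if ((a <= m%:E) && (m%:E < b))%E then Num.sqrt s2 else fine (Order.min (De a) (De b))))%:E.
Proof.
have -> : g = DD k m s2 by apply/funext.
set S := [set _ | _ in _].
have Dpos := DD_gt0 k0 k1 m0 s0.
have upper : forall r, (0 < r)%R -> (forall x, a <= x%:E -> x%:E < b -> (r <= DD k m s2 x)%R) ->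
    ereal_sup S <= (t / r)%:E.
  move=> r r0 hr; apply: ge_ereal_sup => _ [x [xa xb] <-].
  by rewrite lee_fin; apply: div_le => //; apply: hr.
have attained : forall x, a <= x%:E -> x%:E < b -> (t / DD k m s2 x)%:E <= ereal_sup S.
  by move=> x xa xb; apply: ereal_sup_ubound; exists x.
case: ifPn => [/andP[am mb]|nab].
  rewrite -(@DDm _ k m s2); apply/le_anti/andP; split; last exact: attained.
  apply: upper => // x _ _; apply: DD_le => //; rewrite subrr expr0n /=; exact: sqr_ge0.
have [ma|am] := ltP (m%:E) a.
  have [a' ea] : exists a', a = a'%:E.
    case: (a) ha ma => [a'| |] ha ma; [by exists a'| by []|by rewrite ltNge leNye in ma].
  subst a.
  rewrite lee_fin in ha; rewrite lte_fin in ma.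
  have hmin : Order.min (De a'%:E) (De b) = (DD k m s2 a')%:E.
    rewrite min_l; first by rewrite hDe hg.
    rewrite !hDe hg.
    clear attained upper S nab; case: b hb => [b'| |] hb; last by rewrite ltNge leNye in hb.
      rewrite hg lee_fin; rewrite lte_fin in hb; apply: DD_le => //.
      have : (0 <= a' - m)%R by lra.
      have : (a' - m <= b' - m)%R by lra.
      nra.
    exact: leey.
  rewrite hmin /=; apply/le_anti/andP; split.
    apply: upper => // x xa xb; apply: DD_le => //.
    rewrite lee_fin in xa; have : (0 <= a' - m)%R by lra.
    have : (a' - m <= x - m)%R by lra.
    nra.
  by apply: attained => //; apply: le_lt_trans hb; rewrite lee_fin.
have bm : b <= m%:E by rewrite leNgt; move: nab; rewrite am.
have [b' eb] : exists b', b = b'%:E.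
  case: (b) hb bm => [b'| |] hb bm; [by exists b'| by []|by rewrite ltNge leNye in hb].
subst b.
rewrite lee_fin in bm; rewrite lte_fin in hb.
have hmin : Order.min (De a) (De b'%:E) = (DD k m s2 b')%:E.
  rewrite min_r; first by rewrite hDe hg.
  rewrite !hDe hg.
  clear attained upper S nab; case: a ha am => [a'| |] ha am; last exact: leey.
    rewrite hg lee_fin; rewrite lee_fin in ha; apply: DD_le => //.
    have : (b' - m <= 0)%R by lra.
    have : (a' - m <= b' - m)%R by lra.
    nra.
  by rewrite leNgt ltry in ha.
have hl : forall x, a <= x%:E -> x%:E < b'%:E -> (DD k m s2 b' <= DD k m s2 x)%R.
  move=> x xa xb; apply: DD_le => //.
  rewrite lte_fin in xb; have : (b' - m <= 0)%R by lra.
  have : (x - m <= b' - m)%R by lra.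
  nra.
rewrite hmin /=; apply/le_anti/andP; split.
  exact: upper.
have sfin : ereal_sup S \is a fin_num.
  rewrite fin_numElt (lt_le_trans _ (attained x0 ha _)) ?ltNyr ?lte_fin //=.
  by rewrite (le_lt_trans (upper (DD k m s2 b') (Dpos _) hl)) ?ltry.
rewrite -(fineK sfin) lee_fin.
have near_a : \forall x \near b'^'-, a <= x%:E.
  clear attained upper sfin S hmin nab hl; case: a ha am => [a'| |] ha am.
  - rewrite lee_fin in ha; have hab : (a' < b')%R by lra.
    by apply: filterS (nbhs_left_gt hab) => x /ltW; rewrite lee_fin.
  - by rewrite leNgt ltry in ha.
  - by apply: nearW => x; exact: leNye.
apply: (cvgr_to_le (cvg_at_left_filter (tD_cont k0 k1 m0 s0 (t:=t) (w:=b')))).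
near=> x.
have xb : (x < b')%R by near: x; exact: nbhs_left_lt.
have xa : a <= x%:E by near: x; exact: near_a.
have := attained x xa; rewrite lte_fin => /(_ xb).
by rewrite -[in X in X -> _](fineK sfin) lee_fin.
Unshelve. all: by end_near.
Qed.

End C2part.


Lemma sum_pos (R : realType) (n : nat) (F : 'I_n -> R) (i : 'I_n) :
  (forall i, 0 <= F i) -> 0 < F i -> 0 < \sum_(i0 < n) F i0.
Proof.
move=> F0 Fi; rewrite (bigD1 i) //=.
have : 0 <= \sum_(i0 < n | i0 != i) F i0 by apply: sumr_ge0.
lra.
Qed.

Lemma sqr_pos (R : realType) (x : R) : x != 0 -> 0 < x ^+ 2.
Proof. by move=> h; rewrite lt_neqAle sqr_ge0 andbT eq_sym sqrf_eq0. Qed.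

Section Inst.
Variables (R : realType) (n d : nat) (E : 'I_n -> 'I_d -> R) (j : 'I_d).
Hypotheses (n2 : (2 <= n)%N) (E0 : forall i j, 0 <= E i j)
  (Einj : injective (fun i => E i j)).

Let m := muhat E j.
Let S2 := (\sum_(i < n) (E i j - m) ^+ 2) / n%:R.
Let k := (n.+1%:R : R)^-1.

Lemma n0 : (n%:R : R) != 0.
Proof. by rewrite pnatr_eq0 -lt0n (leq_trans _ n2). Qed.

Lemma k0 : 0 < k.
Proof. by rewrite /k invr_gt0 ltr0n. Qed.

Lemma k1 : k < 1.
Proof. rewrite /k invf_lt1 ?ltr0n // ltr1n ltnS; exact: (leq_trans _ n2). Qed.

Let i0 : 'I_n := Ordinal (leq_trans (isT : (1 <= 2)%N) n2).
Let i1 : 'I_n := Ordinal n2.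

Lemma i01 : E i0 j != E i1 j.
Proof. apply/eqP => /Einj /(congr1 val) /=; by []. Qed.

Lemma m0 : 0 < m.
Proof.
rewrite /m /muhat divr_gt0 ?ltr0n ?(leq_trans _ n2) //.
have [h|h] := eqVneq (E i0 j) 0.
  have h1 : 0 < E i1 j by rewrite lt_neqAle E0 andbT eq_sym -h eq_sym i01.
  exact: (sum_pos (i := i1)).
have h1 : 0 < E i0 j by rewrite lt_neqAle E0 andbT eq_sym h.
exact: (sum_pos (i := i0)).
Qed.

Lemma S20 : 0 < S2.
Proof.
rewrite /S2 divr_gt0 ?ltr0n ?(leq_trans _ n2) //.
have [h|h] := eqVneq (E i0 j) m.
  have h1 : E i1 j - m != 0 by rewrite subr_eq0 -h eq_sym i01.
  by apply: (sum_pos (i := i1)) => [i|]; [exact: sqr_ge0|exact: sqr_pos].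
have h1 : E i0 j - m != 0 by rewrite subr_eq0 h.
by apply: (sum_pos (i := i0)) => [i|]; [exact: sqr_ge0|exact: sqr_pos].
Qed.

Lemma muzE z : muz E j z = NN k m z.
Proof.
have nm : \sum_(i < n) E i j = m * n%:R by rewrite /m /muhat divfK // n0.
rewrite /muz /NN nm /k -natr1.
field.
by rewrite natr1 pnatr_eq0.
Qed.

Lemma sigmazE z : sigmaz E j z = DD k m S2 z.
Proof.
rewrite /sigmaz /DD; congr Num.sqrt.
have e1 : \sum_(i < n) (E i j - muz E j z) ^+ 2 = \sum_(i < n) (E i j - m) ^+ 2
   + (2 * (m - muz E j z) * \sum_(i < n) (E i j - m) + n%:R * (m - muz E j z) ^+ 2).
  rewrite (eq_bigr (fun i => (E i j - m) ^+ 2 + (2 * (m - muz E j z) * (E i j - m) + (m - muz E j z) ^+ 2))); last first.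
    by move=> i _; ring.
  by rewrite big_split big_split /= -mulr_sumr sumr_const card_ord [n%:R * _]mulr_natl.
have e2 : \sum_(i < n) (E i j - m) = 0.
  rewrite sumrB sumr_const card_ord -mulr_natl /m /muhat mulrC divfK ?n0 //.
  by rewrite subrr.
rewrite e1 e2 muzE /NN /S2 /k -natr1.
field.
by rewrite addrC natr1 pnatr_eq0 n0.
Qed.

Lemma sigmahatE : sigmahat E j = Num.sqrt S2.
Proof. by []. Qed.

End Inst.

Lemma omega_ge0 (R : realType) (n d : nat) (E : 'I_n -> 'I_d -> R)
  (E0 : forall i j, 0 <= E i j) j c : (0 <= omega E j c)%E.
Proof.
have mu0 : 0 <= muhat E j by rewrite /muhat divr_ge0 // sumr_ge0.
rewrite /omega; case: c => [c| |] /=; [|exact: leey|by []].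
case: ifP => _ //; case: ifP => _; first by rewrite lee_fin le_max lexx.
case: ifP => _; last exact: leey.
rewrite lee_fin; apply: addr_ge0 => //; apply: mulr_ge0; last exact: sqrtr_ge0.
by apply: mulr_ge0; [exact: sqrtr_ge0|exact: normr_ge0].
Qed.


Unset Implicit Arguments.
Unset Strict Implicit.
Theorem lemma3p6 (R : realType) (n d : nat) (alpha : R)
  (E : 'I_n -> 'I_d -> R) (X : Type) (Eres : X -> ('I_d -> R) -> ('I_d -> R))
  (Xtest : X) (h : 'I_d -> nat) (t : 'I_d -> R) :
  (2 <= n)%N -> (1 <= d)%N -> 0 < alpha < 1 ->
  (forall i j, 0 <= E i j) ->
  (forall j, injective (fun i => E i j)) ->
  (forall j, (1 <= h j <= n.+1)%N) ->
  Yh E Eres Xtest alpha h !=set0 ->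
  (forall j, 0 <= t j) ->
  Phi_lwc E alpha t h =
  (\big[Order.max/-oo%E]_(j < d)
     (t j / r_h E alpha j (h j)
      - Num.min (muz E j 0 / sigmaz E j 0) (lim_ratio E alpha j))%:E)%E.
Proof.
move=> n2 d1 a01 E0 Einj h1 [y Yy] t0.
rewrite /Phi_lwc; apply: eq_bigr => j _.
set z0 := Eres Xtest y.
have Rz0 : Rh E alpha h z0 := Yy.
set a := Eord E j (h j).-1.
set b := Uh E alpha j (h j).
have hA : [set ((t j) / sigmaz E j (z j))%:E | z in Rh E alpha h] =
    [set (t j / sigmaz E j x)%:E | x in [set x : R | (a <= x%:E)%E /\ (x%:E < b)%E]].
  apply/seteqP; split => _ [x hx <-].
    by exists (x j) => //; exact: hx j.
  exists (fun k => if k == j then x else z0 k) => /=; last by rewrite eqxx.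
  by move=> k; case: eqP => [->|_] //; exact: Rz0 k.
set w := omega E j (Q_gwc E alpha).
have hB : [set (muz E j (z j) / sigmaz E j (z j))%:E | z in E_gwc E alpha] =
    [set ((fun x => muz E j x / sigmaz E j x) x)%:E | x in [set x : R | 0 <= x /\ (x%:E <= w)%E]].
  apply/seteqP; split => _ [x hx <-].
    by exists (x j) => //; exact: hx j.
  exists (fun k => if k == j then x else 0) => /=; last by rewrite eqxx.
  move=> k; case: eqP => [->|_] //; split => //; exact: omega_ge0.
rewrite hA hB.
have K0 := k0 R n.
have K1 : ((n.+1%:R : R)^-1 < 1) by exact: k1.
have M0 : 0 < muhat E j by exact: m0.
have S0 : 0 < (\sum_(i < n) (E i j - muhat E j) ^+ 2) / n%:R by exact: S20.
have hDe : forall e, sigmaz_e E j e = match e with r%:E => (sigmaz E j r)%:E | _ => +oo%E end.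
  by case.
rewrite (sup_part K0 K1 M0 S0 (g := sigmaz E j) (sigmazE E j n2) hDe (t0 j) (x0 := z0 j) (Rz0 j).1 (Rz0 j).2).
have hf : forall x, (fun x => muz E j x / sigmaz E j x) x = FF (n.+1%:R : R)^-1 (muhat E j) ((\sum_(i < n) (E i j - muhat E j) ^+ 2) / n%:R) x.
  by move=> x /=; rewrite muzE // sigmazE.
rewrite (inf_part K0 K1 M0 S0 hf (omega_ge0 E0 _ _)).
rewrite /r_h /lim_ratio -/w -EFinB.
by [].
Qed.
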